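(* (i) $(\mathfrak{D},\cdot)$ is a group. (ii) The multiplication $\mathfrak{D}\times\mathfrak{D}\to\mathfrak{D}$, $(A,B)\mapsto A\cdot B$, is continuous in the Fréchet topology of $\mathfrak{D}$. (iii) The inversion $\mathfrak{D}\to\mathfrak{D}$, $A\mapsto A^{-1}$, is continuous in the Fréchet topology of $\mathfrak{D}$.
   Context: $\mathfrak{D}$ is the set of linear maps $T=\sum_{\alpha\in\mathbb{N}_0^n}q_\alpha\partial^\alpha$ on $\mathbb{R}[x_1,\dots,x_n]$ with $q_\alpha\in\mathbb{R}[x_1,\dots,x_n]_{\le|\alpha|}$ (degree $\le|\alpha|$) for all $\alpha$ and $\ker T=\{0\}$; the product is composition. Its Fréchet topology is that of coordinate-wise convergence of the coefficients $c_{\alpha,\beta}$ in $q_\alpha=\sum_{|\beta|\le|\alpha|}c_{\alpha,\beta}x^\beta$. *)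

(* Defs.v *)
From HB Require Import structures.
From mathcomp Require Import all_boot all_order all_algebra.
From mathcomp Require Import mpoly.
From mathcomp Require Import all_classical all_reals all_analysis.

Set Implicit Arguments.
Unset Strict Implicit.
Unset Printing Implicit Defensive.

Import Order.TTheory GRing.Theory Num.Theory.
Import numFieldNormedType.Exports.
Local Open Scope ring_scope.
Local Open Scope classical_set_scope.

(* A differential operator T = \sum_alpha q_alpha \partial^alpha on R[x_1..x_n]
   is encoded by its coefficient family c, with
     q_alpha = \sum_{|beta| <= |alpha|} c (alpha, beta) x^beta. *)
Notation coefs n R := {ptws ('X_{1..n} * 'X_{1..n}) -> R}.

Section DiffOps.
Variables (R : realType) (n : nat).

Definition Dqcoef (c : coefs n R) (a : 'X_{1..n}) : {mpoly R[n]} :=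
  \sum_(b : 'X_{1..n < (mdeg a).+1}) c (a, bmnm b) *: 'X_[bmnm b].

(* action of T on a polynomial p; the terms with |alpha| >= msize p vanish,
   since then \partial^alpha p = 0, so this is the full (formally infinite) sum. *)
Definition Dop (c : coefs n R) (p : {mpoly R[n]}) : {mpoly R[n]} :=
  \sum_(a : 'X_{1..n < msize p}) Dqcoef c a * p^`M[bmnm a].

(* degree condition: c(alpha,beta) = 0 whenever |beta| > |alpha|
   (so deg q_alpha <= |alpha| and the family c is exactly the coefficients) *)
Definition Ddeg_ok (c : coefs n R) : Prop :=
  forall a b : 'X_{1..n}, (mdeg a < mdeg b)%N -> c (a, b) = 0.

Definition frakD : set (coefs n R) :=
  [set c | Ddeg_ok c /\ (forall p, Dop c p = 0 -> p = 0)].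

Definition Dmul (c d : coefs n R) : coefs n R :=
  @xget ('X_{1..n} * 'X_{1..n} -> R) (fun _ => 0) [set e : coefs n R | Ddeg_ok e /\ (forall p, Dop e p = Dop c (Dop d p))].

Definition Dunit : coefs n R :=
  fun ab => if (ab.1 == 0%MM) && (ab.2 == 0%MM) then 1 else 0.

Definition Dinv (c : coefs n R) : coefs n R :=
  @xget ('X_{1..n} * 'X_{1..n} -> R) (fun _ => 0) [set e : coefs n R | Ddeg_ok e /\
        (forall p, Dop e (Dop c p) = p) /\ (forall p, Dop c (Dop e p) = p)].

End DiffOps.

Arguments frakD R n : clear implicits.
Arguments Dunit R n : clear implicits.

(* Main.v *)
Require Import Defs.
From HB Require Import structures.
From mathcomp Require Import all_boot all_order all_algebra.
From mathcomp Require Import mpoly.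
From mathcomp Require Import all_classical all_reals all_analysis.

Import Order.TTheory GRing.Theory Num.Theory.
Import numFieldNormedType.Exports.
Local Open Scope ring_scope.
Local Open Scope classical_set_scope.
From mathcomp Require Import ssrcomplements.
From mathcomp Require Import zify.

Section Good.
Variables (R : realType) (T : topologicalType) (A : set T) (x0 : T).
Definition good (f : T -> R) := f x @[x --> within A (nbhs x0)] --> f x0.

Lemma good_ext {f g} : good f -> (forall x, f x = g x) -> good g.
Proof. by move=> + h; have -> : g = f by apply/funext => x; rewrite h. Qed.
Lemma good_cst k : good (fun=> k).
Proof. exact: cvg_cst. Qed.
Lemma good_add {f g} : good f -> good g -> good (fun x => f x + g x).
Proof. exact: cvgD. Qed.
Lemma good_opp {f} : good f -> good (fun x => - f x).
Proof. exact: cvgN. Qed.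
Lemma good_mul {f g} : good f -> good g -> good (fun x => f x * g x).
Proof. exact: cvgM. Qed.
Lemma good_inv {f} : f x0 != 0 -> good f -> good (fun x => (f x)^-1).
Proof. by move=> h; exact: cvgV. Qed.
Lemma good_sum (I : Type) (r : seq I) (P : pred I) (F : I -> T -> R) :
  (forall i, P i -> good (F i)) -> good (fun x => \sum_(i <- r | P i) F i x).
Proof.
move=> h; elim: r => [|i r IH].
  refine (good_ext (good_cst 0) _); by move=> x; rewrite big_nil.
case Pi: (P i).
  refine (good_ext (good_add (h i Pi) IH) _); by move=> x; rewrite big_cons Pi.
refine (good_ext IH _); by move=> x; rewrite big_cons Pi.
Qed.
Lemma good_prod (I : Type) (r : seq I) (P : pred I) (F : I -> T -> R) :
  (forall i, P i -> good (F i)) -> good (fun x => \prod_(i <- r | P i) F i x).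
Proof.
move=> h; elim: r => [|i r IH].
  refine (good_ext (good_cst 1) _); by move=> x; rewrite big_nil.
case Pi: (P i).
  refine (good_ext (good_mul (h i Pi) IH) _); by move=> x; rewrite big_cons Pi.
refine (good_ext IH _); by move=> x; rewrite big_cons Pi.
Qed.
Lemma good_cont f : {for x0, continuous f} -> good f.
Proof. by move=> cf; apply: cvg_trans cf; apply: cvg_fmap2; exact: cvg_within. Qed.
Lemma good_eqA f g : A x0 -> {in A, f =1 g} -> good g -> good f.
Proof.
move=> Ax h hg; rewrite /good.
have -> : f x0 = g x0 by apply: h; rewrite inE.
by apply: cvg_trans hg; exact: fmap_within_eq.
Qed.

Lemma good_det k (G : T -> 'M[R]_k) : (forall i j, good (fun x => G x i j)) ->
  good (fun x => \det (G x)).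
Proof.
move=> h; apply: good_sum => s _; apply: good_mul; first exact: good_cst.
by apply: good_prod => i _; exact: h.
Qed.

Lemma good_adj k (G : T -> 'M[R]_k) : (forall i j, good (fun x => G x i j)) ->
  forall i j, good (fun x => \adj (G x) i j).
Proof.
move=> h i j.
suff H : good (fun x => cofactor (G x) j i) by refine (good_ext H _) => x; rewrite mxE.
rewrite /cofactor; apply: good_mul; first exact: good_cst.
apply: good_det => i' j'.
suff H : good (fun x => G x (lift j i') (lift i j')) by refine (good_ext H _) => x; rewrite !mxE.
exact: h.
Qed.

End Good.
Arguments good {R T} A x0 f.
Arguments good_ext {R T A x0 f g}.
Arguments good_cst {R T A x0} k.
Arguments good_add {R T A x0 f g}.
Arguments good_opp {R T A x0 f}.
Arguments good_mul {R T A x0 f g}.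
Arguments good_inv {R T A x0 f}.
Arguments good_sum {R T A x0 I r P F}.
Arguments good_prod {R T A x0 I r P F}.
Arguments good_cont {R T A x0 f}.
Arguments good_eqA {R T A x0 f g}.
Arguments good_det {R T A x0 k G}.
Arguments good_adj {R T A x0 k G}.

Lemma ptws_cvg (R : realType) (I : Type) (F : set_system {ptws I -> R}) {FF : Filter F} (f : {ptws I -> R}) :
  (forall t, (fun g : {ptws I -> R} => g t) @ F --> f t) -> F --> f.
Proof.
move=> h; apply/cvg_sup => i A /=.
rewrite (@nbhsE (initial_topology (fun g : {ptws I -> R} => g i))).
move=> [_ [[C oC <-] Cf] BA]; apply: (filterS BA); apply: (h i).
by apply: open_nbhs_nbhs; split.
Qed.

Section Alg.
Variables (R : realType) (n : nat).
Local Notation M := ('X_{1..n}).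
Local Notation P := ({mpoly R[n]}).
Implicit Types (c d : coefs n R) (p r : P) (q : M -> P) (a b m : M).

Lemma msize_leP p k : (forall m, m \in msupp p -> (mdeg m < k)%N) -> (msize p <= k)%N.
Proof. by move=> h; rewrite msizeE; apply/bigmax_leqP_seq => m mp _; exact: h. Qed.

Lemma mderivm_big a p : (msize p <= mdeg a)%N -> p^`M[a] = 0.
Proof.
move=> h; apply/mpolyP => m; rewrite mcoeff_mderivm mcoeff0.
have : (a + m)%MM \notin msupp p.
  by apply: msize_mdeg_ge; rewrite mdegD (leq_trans h) // leq_addr.
by rewrite -mcoeff_eq0 => /eqP ->; rewrite mul0rn.
Qed.

Lemma sum_restrict (V : zmodType) k K (F : M -> V) : (k <= K)%N ->
  \sum_(a : 'X_{1..n < K} | (mdeg a < k)%N) F a = \sum_(a : 'X_{1..n < k}) F a.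
Proof.
move=> kK; symmetry.
have := @big_sub_widen V 0 +%R _ (fun m : M => (mdeg m < k)%N)
  (fun m : M => (mdeg m < K)%N) 'X_{1..n < k} 'X_{1..n < K} xpredT F.
by move=> -> // x /leq_trans; apply.
Qed.

Lemma sum_widen (V : zmodType) k K (F : M -> V) : (k <= K)%N ->
  (forall a, (k <= mdeg a)%N -> F a = 0) ->
  \sum_(a : 'X_{1..n < K}) F a = \sum_(a : 'X_{1..n < k}) F a.
Proof.
move=> kK hF.
rewrite (bigID (fun a : 'X_{1..n < K} => (mdeg a < k)%N)) /=.
rewrite [X in _ + X]big1 ?addr0; last by move=> a; rewrite -leqNgt => /hF.
exact: sum_restrict.
Qed.

Definition Opq q p : P := \sum_(a : 'X_{1..n < msize p}) q a * p^`M[a].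

Lemma OpqwE q p K : (msize p <= K)%N ->
  Opq q p = \sum_(a : 'X_{1..n < K}) q a * p^`M[a].
Proof.
move=> h; rewrite /Opq; symmetry.
apply: (@sum_widen _ _ _ (fun a => q a * p^`M[a]) h) => a /mderivm_big ->.
by rewrite mulr0.
Qed.

Lemma OpqD q p1 p2 : Opq q (p1 + p2) = Opq q p1 + Opq q p2.
Proof.
set K := maxn (msize p1) (msize p2).
have h1 : (msize p1 <= K)%N by rewrite leq_maxl.
have h2 : (msize p2 <= K)%N by rewrite leq_maxr.
have h3 : (msize (p1 + p2) <= K)%N by rewrite (leq_trans (msizeD_le _ _)).
rewrite (OpqwE q _ _ h1) (OpqwE q _ _ h2) (OpqwE q _ _ h3) -big_split /=.
by apply: eq_bigr => a _; rewrite mderivmD mulrDr.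
Qed.

Lemma OpqZ q k p : Opq q (k *: p) = k *: Opq q p.
Proof.
have h1 : (msize p <= msize p)%N by [].
have h2 : (msize (k *: p) <= msize p)%N by rewrite msizeZ_le.
rewrite (OpqwE q _ _ h1) (OpqwE q _ _ h2) scaler_sumr.
by apply: eq_bigr => a _; rewrite mderivmZ scalerAr.
Qed.

Lemma Opq0 q : Opq q 0 = 0.
Proof. by have := OpqZ q 0 0; rewrite !scale0r. Qed.

Lemma OpqB q p1 p2 : Opq q (p1 - p2) = Opq q p1 - Opq q p2.
Proof. by rewrite OpqD -scaleN1r OpqZ scaleN1r. Qed.

Lemma lin_expand (L : P -> P) : (forall p1 p2, L (p1 + p2) = L p1 + L p2) ->
  (forall k p, L (k *: p) = k *: L p) ->
  forall p, L p = \sum_(m <- msupp p) p@_m *: L 'X_[m].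
Proof.
move=> LD LZ p; have L0 : L 0 = 0 by have := LZ 0 0; rewrite !scale0r.
rewrite {1}[p]mpolyE (big_morph L LD L0); apply: eq_bigr => m _; exact: LZ.
Qed.

Lemma lin_eq (L1 L2 : P -> P) :
  (forall p1 p2, L1 (p1 + p2) = L1 p1 + L1 p2) -> (forall k p, L1 (k *: p) = k *: L1 p) ->
  (forall p1 p2, L2 (p1 + p2) = L2 p1 + L2 p2) -> (forall k p, L2 (k *: p) = k *: L2 p) ->
  (forall m, L1 'X_[m] = L2 'X_[m]) -> forall p, L1 p = L2 p.
Proof.
move=> D1 Z1 D2 Z2 h p; rewrite (lin_expand _ D1 Z1) (lin_expand _ D2 Z2).
by apply: eq_bigr => m _; rewrite h.
Qed.

Definition fromq q : coefs n R := fun ab => (q ab.1)@_ab.2.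
Definition qok q := forall a, (msize (q a) <= (mdeg a).+1)%N.

Lemma fromq_ok q : qok q -> Ddeg_ok (fromq q).
Proof.
move=> hq a b ab; rewrite /fromq /=; apply/eqP; rewrite mcoeff_eq0.
exact: msize_mdeg_ge (leq_trans (hq a) ab).
Qed.

Lemma Dqcoef_fromq q a : qok q -> Dqcoef (fromq q) a = q a.
Proof. by move=> hq; rewrite /Dqcoef /fromq /= -(mpolywE (hq a)). Qed.

Lemma qok_Dqcoef c : qok (Dqcoef c).
Proof.
move=> a; rewrite /Dqcoef; apply: leq_trans (msize_sum _ _ _) _.
apply/bigmax_leqP => b _; apply: leq_trans (msizeZ_le _ _) _.
by rewrite msizeX bmdeg.
Qed.

Lemma mcoeff_Dqcoef c a b :
  (Dqcoef c a)@_b = if (mdeg b < (mdeg a).+1)%N then c (a, b) else 0.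
Proof.
rewrite /Dqcoef raddf_sum /=; case: ifPn => hb.
  rewrite (bigD1 (BMultinom hb)) //= big1 ?addr0.
    by rewrite mcoeffZ mcoeffX eqxx mulr1.
  move=> b' nb; rewrite mcoeffZ mcoeffX.
  have -> : (bmnm b' == b) = false.
    by apply/negbTE; apply: contra nb => /eqP e; apply/eqP/val_inj.
  by rewrite mulr0.
rewrite big1 // => b' _; rewrite mcoeffZ mcoeffX.
have -> : (bmnm b' == b) = false.
  by apply/negbTE; apply: contra hb => /eqP <-; exact: bmdeg.
by rewrite mulr0.
Qed.

Lemma fromq_Dqcoef c : Ddeg_ok c -> fromq (Dqcoef c) = c.
Proof.
move=> hc; apply/funext => -[a b]; rewrite /fromq /= mcoeff_Dqcoef.
by case: ifPn => // h; rewrite hc // ltnNge -ltnS.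
Qed.

Lemma Dop_fromq q p : qok q -> Dop (fromq q) p = Opq q p.
Proof. by move=> hq; apply: eq_bigr => a _; rewrite Dqcoef_fromq. Qed.

Definition mfact (a : M) : R := (\prod_(i < n) (a i)`!)%:R.

Lemma mfact_neq0 a : mfact a != 0.
Proof.
by rewrite /mfact pnatr_eq0 -lt0n prodn_gt0 // => i; exact: fact_gt0.
Qed.

Lemma mderivm_self a : ('X_[a])^`M[a] = mfact a *: (1 : P).
Proof.
rewrite mderivmX /mfact; congr (_ *: _); last first.
  by rewrite -mpolyX0; congr 'X_[_]; apply/mnmP => i; rewrite mnmBE subnn mnm0E.
by congr (_%:R); apply: eq_bigr => i _; rewrite ffactnn.
Qed.

Lemma mderivmX_eq0 a a' : ~~ (a' <= a)%MM -> ('X_[a])^`M[a'] = 0 :> P.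
Proof.
move=> h; rewrite mderivmX.
have [i hi] : exists i, (a i < a' i)%N.
  apply/existsP; apply: contraR h => /existsPn H; apply/mnm_lepP => i.
  by rewrite leqNgt H.
by rewrite (bigD1 i) //= ffact_small // mul0n scale0r.
Qed.

Lemma le_mdeg_eq a a' : (a' <= a)%MM -> mdeg a' = mdeg a -> a' = a.
Proof.
move=> le e; have h := submK le.
have : mdeg (a - a')%MM = 0%N.
  by apply/eqP; rewrite -(eqn_add2r (mdeg a')) -mdegD h e add0n.
by move/eqP; rewrite mdeg_eq0 => /eqP e0; rewrite -h e0 add0m.
Qed.

Lemma OpqX_split q a : Opq q 'X_[a] =
  \sum_(a' : 'X_{1..n < mdeg a}) q a' * ('X_[a])^`M[a'] + mfact a *: q a.
Proof.
rewrite /Opq msizeX.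
rewrite (bigID (fun a' : 'X_{1..n < (mdeg a).+1} => (mdeg a' < mdeg a)%N)) /=.
congr (_ + _); first exact: (@sum_restrict _ _ _ (fun a' => q a' * ('X_[a])^`M[a']) (leqnSn _)).
have ha : (mdeg a < (mdeg a).+1)%N by [].
rewrite (bigD1 (BMultinom ha)) /= ?ltnn // big1 ?addr0.
  by rewrite mderivm_self -scalerAr mulr1.
move=> a' /andP[h1 h2].
have e : mdeg a' = mdeg a.
  by apply/eqP; rewrite eqn_leq -ltnS bmdeg leqNgt h1.
have [le|nle] := boolP (a' <= a)%MM; last by rewrite mderivmX_eq0 // mulr0.
by case/negP: h2; apply/eqP/val_inj; rewrite /= (@le_mdeg_eq _ _ le e).
Qed.

Fixpoint QN (Lm : M -> P) (N : nat) (a : M) : P :=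
  match N with
  | 0 => 0
  | N'.+1 => if mdeg a == N' then
       (mfact a)^-1 *: (Lm a - \sum_(a' : 'X_{1..n < N'}) QN Lm N' a' * ('X_[a])^`M[a'])
     else QN Lm N' a
  end.
Definition Qf Lm a := QN Lm (mdeg a).+1 a.

Lemma QN_Qf Lm N a : (mdeg a < N)%N -> QN Lm N a = Qf Lm a.
Proof.
elim: N => // N IH h /=; case: eqP => [e|ne].
  by rewrite /Qf -e /= eqxx.
by rewrite IH // ltn_neqAle; apply/andP; split; [apply/eqP|rewrite -ltnS].
Qed.

Lemma QfE Lm a : Qf Lm a = (mfact a)^-1 *:
  (Lm a - \sum_(a' : 'X_{1..n < mdeg a}) Qf Lm a' * ('X_[a])^`M[a']).
Proof.
rewrite {1}/Qf /= eqxx; congr (_ *: (_ - _)); apply: eq_bigr => a' _.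
by rewrite QN_Qf // bmdeg.
Qed.

Lemma Qf_Opq q a : q a = Qf (fun m => Opq q 'X_[m]) a.
Proof.
suff H : forall N a, (mdeg a < N)%N -> q a = Qf (fun m => Opq q 'X_[m]) a.
  exact: (H (mdeg a).+1).
elim=> // N IH b hb; rewrite QfE OpqX_split.
have -> : \sum_(a' : 'X_{1..n < mdeg b}) Qf (fun m => Opq q 'X_[m]) a' * ('X_[b])^`M[a']
   = \sum_(a' : 'X_{1..n < mdeg b}) q a' * ('X_[b])^`M[a'].
  apply: eq_bigr => a' _; rewrite -IH //.
  by apply: leq_trans (bmdeg a') _; rewrite -ltnS.
by rewrite addrAC subrr add0r scalerA mulVf ?mfact_neq0 // scale1r.
Qed.

Lemma Opq_Qf Lm a : Opq (Qf Lm) 'X_[a] = Lm a.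
Proof.
rewrite OpqX_split [X in _ + _ *: X]QfE scalerA mulfV ?mfact_neq0 // scale1r.
by rewrite addrC subrK.
Qed.

Lemma X_neq0 m : 'X_[m] != 0 :> P.
Proof. by rewrite -msize_poly_eq0 msizeX. Qed.

Lemma msize_term r a' a : (msize r <= (mdeg a').+1)%N ->
  (msize (r * ('X_[a])^`M[a']) <= (mdeg a).+1)%N.
Proof.
move=> hr; have [le|nle] := boolP (a' <= a)%MM; last first.
  by rewrite mderivmX_eq0 // mulr0 msize0.
rewrite mderivmX -scalerAr; apply: leq_trans (msizeZ_le _ _) _.
have [->|rn0] := eqVneq r 0; first by rewrite mul0r msize0.
rewrite msizeM ?X_neq0 // msizeX.
have e : mdeg a = (mdeg (a - a')%MM + mdeg a')%N by rewrite -mdegD submK.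
rewrite e addnS /= addnC -addnS leq_add2l; exact: hr.
Qed.

Lemma msize_Opq_X q m : qok q -> (msize (Opq q 'X_[m]) <= (mdeg m).+1)%N.
Proof.
move=> hq; rewrite /Opq msizeX; apply: leq_trans (msize_sum _ _ _) _.
by apply/bigmax_leqP => a _; apply: msize_term.
Qed.

Lemma msize_Opq q p : qok q -> (msize (Opq q p) <= msize p)%N.
Proof.
move=> hq; rewrite (lin_expand _ (OpqD q) (OpqZ q)).
apply: leq_trans (msize_sum _ _ _) _; apply/bigmax_leqP_seq => m mp _.
apply: leq_trans (msizeZ_le _ _) _; apply: leq_trans (msize_Opq_X q m hq) _.
exact: msize_mdeg_lt.
Qed.

Lemma Qf_ok Lm : (forall m, (msize (Lm m) <= (mdeg m).+1)%N) -> qok (Qf Lm).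
Proof.
move=> hL.
suff H : forall N a, (mdeg a < N)%N -> (msize (Qf Lm a) <= (mdeg a).+1)%N.
  by move=> a; exact: (H (mdeg a).+1).
elim=> // N IH b hb; rewrite QfE; apply: leq_trans (msizeZ_le _ _) _.
apply: leq_trans (msizeD_le _ _) _; rewrite geq_max hL msizeN.
apply: leq_trans (msize_sum _ _ _) _; apply/bigmax_leqP => a' _.
apply: msize_term; apply: IH.
by apply: leq_trans (bmdeg a') _; rewrite -ltnS.
Qed.


Lemma DopD c p1 p2 : Dop c (p1 + p2) = Dop c p1 + Dop c p2.
Proof. exact: OpqD. Qed.
Lemma DopZ c k p : Dop c (k *: p) = k *: Dop c p.
Proof. exact: OpqZ. Qed.
Lemma Dop0 c : Dop c 0 = 0.
Proof. exact: Opq0. Qed.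
Lemma DopB c p1 p2 : Dop c (p1 - p2) = Dop c p1 - Dop c p2.
Proof. exact: OpqB. Qed.
Lemma msize_Dop c p : (msize (Dop c p) <= msize p)%N.
Proof. exact: msize_Opq (qok_Dqcoef c). Qed.

Lemma Dop_unique c c' : Ddeg_ok c -> Ddeg_ok c' ->
  (forall m, Dop c 'X_[m] = Dop c' 'X_[m]) -> c = c'.
Proof.
move=> hc hc' h; rewrite -(fromq_Dqcoef _ hc) -(fromq_Dqcoef _ hc'); congr fromq.
apply/funext => a; rewrite [LHS]Qf_Opq [RHS]Qf_Opq.
by congr Qf; apply/funext => m; exact: h.
Qed.

Definition Lop (L : P -> P) : coefs n R := fromq (Qf (fun m => L 'X_[m])).

Lemma Lop_spec (L : P -> P) : (forall p1 p2, L (p1 + p2) = L p1 + L p2) ->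
  (forall k p, L (k *: p) = k *: L p) ->
  (forall m, (msize (L 'X_[m]) <= (mdeg m).+1)%N) ->
  Ddeg_ok (Lop L) /\ forall p, Dop (Lop L) p = L p.
Proof.
move=> LD LZ Ls; have hq : qok (Qf (fun m => L 'X_[m])) by apply: Qf_ok.
split; first exact: fromq_ok.
move=> p; rewrite Dop_fromq //; apply: lin_eq => //; first exact: OpqD.
  exact: OpqZ.
by move=> m; exact: Opq_Qf.
Qed.

Lemma Dmul_spec c d : Ddeg_ok (Dmul c d) /\ forall p, Dop (Dmul c d) p = Dop c (Dop d p).
Proof.
pose S := [set e : coefs n R | Ddeg_ok e /\ (forall p, Dop e p = Dop c (Dop d p))].
suff : S (xget (fun _ => 0) S) by [].
apply: xgetPex.
have [] := @Lop_spec (fun p => Dop c (Dop d p)).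
- by move=> p1 p2; rewrite !DopD.
- by move=> k p; rewrite !DopZ.
- move=> m; rewrite (leq_trans (msize_Dop _ _)) // (leq_trans (msize_Dop _ _)) //.
  by rewrite msizeX.
by move=> h1 h2; exists (Lop (fun p => Dop c (Dop d p))).
Qed.

Lemma Dmul_uniq c d e : Ddeg_ok e -> (forall p, Dop e p = Dop c (Dop d p)) ->
  Dmul c d = e.
Proof.
have [h1 h2] := Dmul_spec c d; move=> he h; apply: Dop_unique => // m.
by rewrite h2 h.
Qed.

Lemma DmulE c d : Dmul c d = Lop (fun p => Dop c (Dop d p)).
Proof.
have [] := @Lop_spec (fun p => Dop c (Dop d p)).
- by move=> p1 p2; rewrite !DopD.
- by move=> k p; rewrite !DopZ.
- move=> m; rewrite (leq_trans (msize_Dop _ _)) // (leq_trans (msize_Dop _ _)) //.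
  by rewrite msizeX.
by move=> h1 h2; apply: Dmul_uniq.
Qed.

Definition q1 : M -> P := fun a => if a == 0%MM then 1 else 0.

Lemma qok_q1 : qok q1.
Proof. by move=> a; rewrite /q1; case: ifP => _; rewrite ?msize1 ?msize0. Qed.

Lemma Dunit_fromq : Dunit R n = fromq q1.
Proof.
apply/funext => -[a b]; rewrite /Dunit /fromq /q1 /=.
case: (a == 0%MM); rewrite ?mcoeff1 ?mcoeff0 //=.
by case: (b == 0%MM).
Qed.

Lemma Opq1 p : Opq q1 p = p.
Proof.
have [->|pn0] := eqVneq p 0; first by rewrite Opq0.
have h0 : (mdeg (0%MM : M) < msize p)%N by rewrite mdeg0 lt0n msize_poly_eq0.
rewrite /Opq (bigD1 (BMultinom h0)) //= big1 ?addr0.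
  by rewrite /q1 eqxx mul1r mderivm0m.
move=> a ne; rewrite /q1.
have -> : (bmnm a == 0%MM) = false.
  by apply/negbTE; apply: contra ne => /eqP e; apply/eqP/val_inj.
by rewrite mul0r.
Qed.

Lemma Dop_unit p : Dop (Dunit R n) p = p.
Proof. by rewrite Dunit_fromq Dop_fromq; [exact: Opq1|exact: qok_q1]. Qed.

Lemma Dunit_ok : Ddeg_ok (Dunit R n).
Proof. by rewrite Dunit_fromq; apply: fromq_ok; exact: qok_q1. Qed.

Definition ev N (i : 'I_#|{: 'X_{1..n < N}}|) : M := val (enum_val i).
Arguments ev {N} i.

Lemma ev_inj N : injective (@ev N).
Proof. by move=> i j /val_inj /enum_val_inj. Qed.

Lemma ev_deg N i : (mdeg (@ev N i) < N)%N.
Proof. exact: bmdeg. Qed.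

Lemma sum_ev N (V : zmodType) (F : M -> V) :
  \sum_(i < #|{: 'X_{1..n < N}}|) F (ev i) = \sum_(a : 'X_{1..n < N}) F a.
Proof.
rewrite [RHS](reindex (@enum_val _ predT)) /=; last first.
  by apply: onW_bij; exact: enum_val_bij.
by [].
Qed.

Lemma ev_rank N (x : 'X_{1..n < N}) : ev (enum_rank x) = val x.
Proof. by rewrite /ev enum_rankK. Qed.

Definition MN N c : 'M[R]_#|{: 'X_{1..n < N}}| :=
  \matrix_(i, j) (Dop c 'X_[ev i])@_(ev j).
Definition vp N (v : 'rV[R]_#|{: 'X_{1..n < N}}|) : P := \sum_i v 0 i *: 'X_[ev i].
Arguments vp {N} v.
Definition pv N p : 'rV[R]_#|{: 'X_{1..n < N}}| := \row_j p@_(ev j).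

Lemma mcoeff_vp N v m : (@vp N v)@_m = \sum_i v 0 i * ((ev i == m)%:R).
Proof.
by rewrite /vp raddf_sum /=; apply: eq_bigr => i _; rewrite mcoeffZ mcoeffX.
Qed.

Lemma mcoeff_vp_ev N v j : (@vp N v)@_(ev j) = v 0 j.
Proof.
rewrite mcoeff_vp (bigD1 j) //= eqxx mulr1 big1 ?addr0 // => i ne.
by rewrite (inj_eq (@ev_inj N)) (negbTE ne) mulr0.
Qed.

Lemma msize_vp N v : (msize (@vp N v) <= N)%N.
Proof.
apply: leq_trans (msize_sum _ _ _) _; apply/bigmax_leqP => i _.
by apply: leq_trans (msizeZ_le _ _) _; rewrite msizeX ev_deg.
Qed.

Lemma vp_pv N p : (msize p <= N)%N -> vp (@pv N p) = p.
Proof.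
move=> h; rewrite {2}(mpolywE h) /vp -(@sum_ev N _ (fun a => p@_a *: 'X_[a])).
by apply: eq_bigr => i _; rewrite mxE.
Qed.

Lemma Dop_vp N c v j : (Dop c (@vp N v))@_(ev j) = (v *m MN N c) 0 j.
Proof.
rewrite /vp (big_morph (Dop c) (DopD c) (Dop0 c)) raddf_sum /= mxE.
by apply: eq_bigr => i _; rewrite DopZ mcoeffZ mxE.
Qed.

Lemma mcoeff_small N p m : (msize p <= N)%N -> (N <= mdeg m)%N -> p@_m = 0.
Proof.
move=> h1 h2; apply/eqP; rewrite mcoeff_eq0; apply: msize_mdeg_ge.
exact: leq_trans h2.
Qed.

Lemma poly_eqN N p r : (msize p <= N)%N -> (msize r <= N)%N ->
  (forall j, p@_(@ev N j) = r@_(ev j)) -> p = r.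
Proof.
move=> hp hr h; apply/mpolyP => m.
have [lt|ge] := ltnP (mdeg m) N; last by rewrite (@mcoeff_small N p m hp ge) (@mcoeff_small N r m hr ge).
by have := h (enum_rank (BMultinom lt)); rewrite ev_rank.
Qed.

Lemma MN_unit N c : frakD R n c -> MN N c \in unitmx.
Proof.
move=> [hc ic]; rewrite unitmxE unitfE; apply/negP => /det0P [v vn0 hv].
have e : Dop c (vp v) = 0.
  apply: (@poly_eqN N); first by apply: leq_trans (msize_Dop _ _) (msize_vp _ _).
    by rewrite msize0.
  by move=> j; rewrite Dop_vp hv mxE mcoeff0.
have := ic _ e => ev0; case/eqP: vn0; apply/rowP => j.
by rewrite -mcoeff_vp_ev ev0 mcoeff0 mxE.
Qed.

Lemma Dop_surjN N c p : frakD R n c -> (msize p <= N)%N ->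
  Dop c (vp (@pv N p *m invmx (MN N c))) = p.
Proof.
move=> hc hp; apply: (@poly_eqN N) => //.
  by apply: leq_trans (msize_Dop _ _) (msize_vp _ _).
by move=> j; rewrite Dop_vp mulmxKV ?MN_unit // mxE.
Qed.

Lemma Dop_surj c : frakD R n c -> forall p, exists r, (msize r <= msize p)%N /\ Dop c r = p.
Proof.
move=> hc p; exists (vp (@pv (msize p) p *m invmx (MN (msize p) c))).
by split; [exact: msize_vp|exact: Dop_surjN].
Qed.

Definition Linv c p : P := xget 0 [set r | Dop c r = p].

Lemma Linv_spec c p : frakD R n c -> Dop c (Linv c p) = p.
Proof.
move=> hc; rewrite /Linv.
suff : [set r | Dop c r = p] (xget 0 [set r | Dop c r = p]) by [].
apply: xgetPex.
by have [r [_ hr]] := Dop_surj _ hc p; exists r.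
Qed.

Lemma Dop_inj c r1 r2 : frakD R n c -> Dop c r1 = Dop c r2 -> r1 = r2.
Proof.
move=> [_ ic] h; apply/eqP; rewrite -subr_eq0; apply/eqP/ic.
by rewrite DopB h subrr.
Qed.

Lemma Linv_eq c p r : frakD R n c -> Dop c r = p -> Linv c p = r.
Proof. by move=> hc e; apply: (Dop_inj _ _ _ hc); rewrite Linv_spec. Qed.

Lemma Linv_size c p : frakD R n c -> (msize (Linv c p) <= msize p)%N.
Proof. by move=> hc; have [r [hr e]] := Dop_surj _ hc p; rewrite (Linv_eq _ _ _ hc e). Qed.

Lemma LinvD c p1 p2 : frakD R n c -> Linv c (p1 + p2) = Linv c p1 + Linv c p2.
Proof. by move=> hc; apply: Linv_eq => //; rewrite DopD !Linv_spec. Qed.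

Lemma LinvZ c k p : frakD R n c -> Linv c (k *: p) = k *: Linv c p.
Proof. by move=> hc; apply: Linv_eq => //; rewrite DopZ !Linv_spec. Qed.

Lemma Lop_Linv c : frakD R n c ->
  Ddeg_ok (Lop (Linv c)) /\ forall p, Dop (Lop (Linv c)) p = Linv c p.
Proof.
move=> hc; apply: Lop_spec.
- by move=> p1 p2; exact: LinvD.
- by move=> k p; exact: LinvZ.
- by move=> m; rewrite -(@msizeX n R m); exact: Linv_size.
Qed.

Lemma Dinv_spec c : frakD R n c -> Ddeg_ok (Dinv c) /\
  (forall p, Dop (Dinv c) (Dop c p) = p) /\ (forall p, Dop c (Dop (Dinv c) p) = p).
Proof.
move=> hc.
pose S := [set e : coefs n R | Ddeg_ok e /\
        (forall p, Dop e (Dop c p) = p) /\ (forall p, Dop c (Dop e p) = p)].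
suff : S (xget (fun _ => 0) S) by [].
apply: xgetPex.
have [h1 h2] := Lop_Linv _ hc; exists (Lop (Linv c)); split => //; split => p.
  by rewrite h2; exact: Linv_eq.
by rewrite h2; exact: Linv_spec.
Qed.

Lemma DinvE c : frakD R n c -> Dinv c = Lop (Linv c).
Proof.
move=> hc; have [h1 [h2 h3]] := Dinv_spec _ hc; have [h4 h5] := Lop_Linv _ hc.
apply: Dop_unique => // m; rewrite h5; symmetry; exact: Linv_eq.
Qed.

Lemma group_part : 
  ((forall c d, frakD R n c -> frakD R n d -> frakD R n (Dmul c d)) /\
   (forall c d e, frakD R n c -> frakD R n d -> frakD R n e ->
      Dmul (Dmul c d) e = Dmul c (Dmul d e)) /\
   frakD R n (Dunit R n) /\
   (forall c, frakD R n c -> Dmul (Dunit R n) c = c /\ Dmul c (Dunit R n) = c) /\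
   (forall c, frakD R n c ->
      frakD R n (Dinv c) /\ Dmul (Dinv c) c = Dunit R n /\ Dmul c (Dinv c) = Dunit R n)).
Proof.
split.
  move=> c d [hc ic] [hd id]; have [h1 h2] := Dmul_spec c d.
  by split=> // p; rewrite h2 => /ic /id.
split.
  move=> c d e _ _ _; apply: Dmul_uniq; first by case: (Dmul_spec c (Dmul d e)).
  move=> p; rewrite (Dmul_spec c (Dmul d e)).2 (Dmul_spec d e).2.
  by rewrite (Dmul_spec c d).2.
split.
  by split; [exact: Dunit_ok|move=> p; rewrite Dop_unit].
split.
  move=> c [hc ic]; split; apply: Dmul_uniq => // p; by rewrite Dop_unit.
move=> c hc; have [h1 [h2 h3]] := Dinv_spec _ hc; split.
  split=> // p e; by rewrite -[p]h3 e Dop0.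
split; apply: Dmul_uniq.
- exact: Dunit_ok.
- by move=> p; rewrite Dop_unit h2.
- exact: Dunit_ok.
- by move=> p; rewrite Dop_unit h3.
Qed.

Section ContP.
Variables (T : topologicalType) (A : set T) (x0 : T).
Definition goodP (G : T -> P) := forall m, good A x0 (fun x => (G x)@_m).

Lemma goodP_ext {G H} : goodP G -> (forall x, G x = H x) -> goodP H.
Proof. by move=> hG e m; refine (good_ext (hG m) _) => x; rewrite e. Qed.
Lemma goodP_cst p : goodP (fun=> p).
Proof. by move=> m; exact: good_cst. Qed.
Lemma goodP_add {G H} : goodP G -> goodP H -> goodP (fun x => G x + H x).
Proof.
by move=> hG hH m; refine (good_ext (good_add (hG m) (hH m)) _) => x; rewrite mcoeffD.
Qed.
Lemma goodP_opp {G} : goodP G -> goodP (fun x => - G x).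
Proof. by move=> hG m; refine (good_ext (good_opp (hG m)) _) => x; rewrite mcoeffN. Qed.
Lemma goodP_scale {s : T -> R} {G} : good A x0 s -> goodP G -> goodP (fun x => s x *: G x).
Proof.
by move=> hs hG m; refine (good_ext (good_mul hs (hG m)) _) => x; rewrite mcoeffZ.
Qed.
Lemma goodP_mul {G H} : goodP G -> goodP H -> goodP (fun x => G x * H x).
Proof.
move=> hG hH m.
refine (good_ext (good_sum (fun k _ => good_mul (hG (bmnm k.1)) (hH (bmnm k.2)))) _) => x.
by rewrite mcoeffM.
Qed.
Lemma goodP_sum {I : Type} {r : seq I} {Pr : pred I} {F : I -> T -> P} :
  (forall i, goodP (F i)) -> goodP (fun x => \sum_(i <- r | Pr i) F i x).
Proof.
move=> hF m; refine (good_ext (good_sum (fun i _ => hF i m)) _) => x.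
by rewrite raddf_sum.
Qed.
Lemma goodP_deriv a {G} : goodP G -> goodP (fun x => (G x)^`M[a]).
Proof.
move=> hG m.
refine (good_ext (good_mul (hG (a + m)%MM)
  (good_cst ((\prod_(i < n) ((a + m)%MM i)^_(a i))%:R))) _) => x.
by rewrite mcoeff_mderivm mulr_natr.
Qed.

Lemma goodP_Qf (Lm : T -> M -> P) : (forall m, goodP (fun x => Lm x m)) ->
  forall a, goodP (fun x => Qf (Lm x) a).
Proof.
move=> hL a; rewrite /Qf.
suff H : forall N b, goodP (fun x => QN (Lm x) N b) by exact: H.
elim=> [|N IH] b /=; first exact: goodP_cst.
case: (mdeg b == N); last exact: IH.
apply: goodP_scale; first exact: good_cst.
apply: goodP_add; first exact: hL.
apply: goodP_opp; apply: goodP_sum => a'; apply: goodP_mul; first exact: IH.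
exact: goodP_cst.
Qed.

Lemma goodP_Dqcoef (C : T -> coefs n R) a : (forall ab, good A x0 (fun x => C x ab)) ->
  goodP (fun x => Dqcoef (C x) a).
Proof.
move=> hC.
suff H : goodP (fun x => \sum_(b : 'X_{1..n < (mdeg a).+1}) C x (a, bmnm b) *: 'X_[bmnm b]).
  by refine (goodP_ext H _) => x.
apply: goodP_sum => b.
by apply: goodP_scale; [exact: hC|exact: goodP_cst].
Qed.

Lemma goodP_Dop_fixed (C : T -> coefs n R) p : (forall ab, good A x0 (fun x => C x ab)) ->
  goodP (fun x => Dop (C x) p).
Proof.
move=> hC.
suff H : goodP (fun x => \sum_(a : 'X_{1..n < msize p}) Dqcoef (C x) a * p^`M[bmnm a]).
  by refine (goodP_ext H _) => x.
apply: goodP_sum => a.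
by apply: goodP_mul; [exact: goodP_Dqcoef|exact: goodP_cst].
Qed.

Lemma goodP_Dop2 (C D : T -> coefs n R) m : (forall ab, good A x0 (fun x => C x ab)) ->
  (forall ab, good A x0 (fun x => D x ab)) ->
  goodP (fun x => Dop (C x) (Dop (D x) 'X_[m])).
Proof.
move=> hC hD.
suff H : goodP (fun x => \sum_(a : 'X_{1..n < (mdeg m).+1})
    Dqcoef (C x) a * (Dop (D x) 'X_[m])^`M[bmnm a]).
  refine (goodP_ext H _) => x; symmetry; apply: OpqwE.
  by rewrite -(@msizeX n R m); exact: msize_Dop.
apply: goodP_sum => a.
apply: goodP_mul; first exact: goodP_Dqcoef.
by apply: goodP_deriv; exact: goodP_Dop_fixed.
Qed.

End ContP.

Lemma within_cont_coefs (T : topologicalType) (A : set T) (f : T -> coefs n R) :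
  (forall y, A y -> forall t, good A y (fun x => f x t)) -> {within A, continuous f}.
Proof.
move=> h; apply/subspace_continuousP => x Ax; rewrite /from_subspace.
apply: (@ptws_cvg R _ (f @ within A (nbhs x)) _ (f x)) => t; exact: h.
Qed.

Lemma mul_cont : {within frakD R n `*` frakD R n,
     continuous (fun cd : coefs n R * coefs n R => Dmul cd.1 cd.2)}.
Proof.
apply: within_cont_coefs => y Ay [a b].
have hC : forall ab, good (frakD R n `*` frakD R n) y (fun x : coefs n R * coefs n R => x.1 ab).
  move=> ab; apply: good_cont.
  apply: (@continuous_comp _ _ _ fst (fun c : coefs n R => c ab) y); first exact: cvg_fst.
  exact: proj_continuous.
have hD : forall ab, good (frakD R n `*` frakD R n) y (fun x : coefs n R * coefs n R => x.2 ab).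
  move=> ab; apply: good_cont.
  apply: (@continuous_comp _ _ _ snd (fun c : coefs n R => c ab) y); first exact: cvg_snd.
  exact: proj_continuous.
have := @goodP_Qf _ _ y (fun x m => Dop x.1 (Dop x.2 'X_[m])) (fun m => @goodP_Dop2 _ _ y _ _ m hC hD) a b.
by move=> H; refine (good_ext H _) => x; rewrite DmulE.
Qed.

Lemma inv_cont : {within frakD R n, continuous (fun c : coefs n R => Dinv c)}.
Proof.
apply: within_cont_coefs => y Ay [a b].
have hC : forall ab, good (frakD R n) y (fun x : coefs n R => x ab).
  by move=> ab; apply: good_cont; exact: proj_continuous.
apply: (good_eqA (g := fun c => (Qf (fun m => Linv c 'X_[m]) a)@_b)) => //.
  by move=> c /set_mem hc; rewrite DinvE.
apply: goodP_Qf => m m'.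
set N := (mdeg m).+1.
have hM : forall i j, good (frakD R n) y (fun c => MN N c i j).
  move=> i j; refine (good_ext (@goodP_Dop_fixed _ _ y _ 'X_[ev i] hC (ev j)) _) => c.
  by rewrite mxE.
apply: (good_eqA (g := fun c => \sum_i (\sum_j (pv N 'X_[m]) 0 j *
     ((\det (MN N c))^-1 * \adj (MN N c) j i)) * ((ev i == m')%:R))) => //.
  move=> c /set_mem hc.
  have hp : (msize ('X_[m] : P) <= N)%N by rewrite msizeX.
  rewrite (Linv_eq _ _ _ hc (Dop_surjN _ _ _ hc hp)) mcoeff_vp.
  apply: eq_bigr => i _; rewrite !mxE; congr (_ * _).
  by apply: eq_bigr => j _; rewrite /invmx MN_unit // !mxE.
apply: good_sum => i _; apply: good_mul; last exact: good_cst.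
apply: good_sum => j _; apply: good_mul; first exact: good_cst.
apply: good_mul; last exact: good_adj.
apply: good_inv; last exact: good_det.
by have := MN_unit N y Ay; rewrite unitmxE unitfE.
Qed.

End Alg.

Theorem lemma3p2 (R : realType) (n : nat) :
  (* (i) (frakD, .) is a group *)
  ((forall c d, frakD R n c -> frakD R n d -> frakD R n (Dmul c d)) /\
   (forall c d e, frakD R n c -> frakD R n d -> frakD R n e ->
      Dmul (Dmul c d) e = Dmul c (Dmul d e)) /\
   frakD R n (Dunit R n) /\
   (forall c, frakD R n c -> Dmul (Dunit R n) c = c /\ Dmul c (Dunit R n) = c) /\
   (forall c, frakD R n c ->
      frakD R n (Dinv c) /\ Dmul (Dinv c) c = Dunit R n /\ Dmul c (Dinv c) = Dunit R n)) /\
  (* (ii) multiplication is continuous *)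
  {within frakD R n `*` frakD R n,
     continuous (fun cd : coefs n R * coefs n R => Dmul cd.1 cd.2)} /\
  (* (iii) inversion is continuous *)
  {within frakD R n, continuous (fun c : coefs n R => Dinv c)}.
Proof.
split; first exact: group_part.
split; [exact: mul_cont | exact: inv_cont].
Qed.
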